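(* Let $A \subset \mathbb{Z}^d$ consist of exactly $d+2$ points, contain $0$, and generate $\mathbb{Z}^d$ additively. Denote the nonzero elements of $A$ by $v_0, v_1, \ldots, v_d$, where $v_1, \ldots, v_d$ are linearly independent. For integers $k$ let $C_k = \{\sum_{i=1}^d n_i v_i : n_i \in \mathbb{N}, \ \sum_{i=1}^d n_i \leq k\}$ (so $C_k = \emptyset$ for $k < 0$), and for integers $j, h \geq 0$ let $A_{j,h} = j v_0 + C_{h-j}$. Let $N$ be the order of $v_0$ in the finite group $\mathbb{Z}^d / \mathrm{span}_{\mathbb{Z}}\{v_1,\ldots,v_d\}$. Let $h \geq 0$ and let $I \subseteq \{0,1,\ldots,h\}$ be a nonempty set all of whose elements are congruent modulo $N$, with $m = \min I$ and $M = \max I$. Then \[ \bigcap_{j \in I} A_{j,h} = A_{m,h} \cap A_{M,h}. \]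
   Context: $\mathbb{N} = \{0,1,2,\ldots\}$; for a vector $x$ and set $S$, $x + S = \{x + s : s \in S\}$. *)

(* Defs.v *)
From HB Require Import structures.
From mathcomp Require Import all_boot all_order all_algebra.
Set Implicit Arguments. Unset Strict Implicit. Unset Printing Implicit Defensive.
Import Order.TTheory GRing.Theory Num.Theory.
Local Open Scope ring_scope.

(* Points are labelled v : 'I_d.+1 -> 'rV[int]_d with v ord0 = v_0 and
   v (lift ord0 i) = v_(i+1) for i : 'I_d. *)

Definition in_span_tail (d : nat) (v : 'I_d.+1 -> 'rV[int]_d) (x : 'rV[int]_d) : Prop :=
  exists c : 'I_d -> int, x = \sum_(i < d) (v (lift ord0 i)) *~ c i.

Definition is_order_mod_span (d : nat) (v : 'I_d.+1 -> 'rV[int]_d) (N : nat) : Prop :=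
  (0 < N)%N /\ in_span_tail v ((v ord0) *+ N) /\
  forall n : nat, (0 < n)%N -> (n < N)%N -> ~ in_span_tail v ((v ord0) *+ n).

Definition Cset (d : nat) (v : 'I_d.+1 -> 'rV[int]_d) (k : int) (x : 'rV[int]_d) : Prop :=
  exists n : 'I_d -> nat,
    ((\sum_(i < d) n i)%:Z <= k) /\ x = \sum_(i < d) (v (lift ord0 i)) *+ n i.

Definition Aset (d : nat) (v : 'I_d.+1 -> 'rV[int]_d) (j h : nat) (x : 'rV[int]_d) : Prop :=
  exists y, Cset v (h%:Z - j%:Z) y /\ x = (v ord0) *+ j + y.

(* Main.v *)
Require Import Defs.
From HB Require Import structures.
From mathcomp Require Import all_boot all_order all_algebra.
From mathcomp Require Import zify.
Import Order.TTheory GRing.Theory Num.Theory.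
Local Open Scope ring_scope.

Lemma Posz_sum (d : nat) (F : 'I_d -> nat) : ((\sum_(i < d) F i)%N)%:Z = \sum_(i < d) (F i)%:Z.
Proof. by apply: (big_morph Posz PoszD). Qed.

Lemma sum_nat_int (d : nat) (w : 'I_d -> 'rV[int]_d) (F : 'I_d -> nat) :
  \sum_(i < d) w i *+ F i = \sum_(i < d) w i *~ (F i)%:Z.
Proof. by apply: eq_bigr => i _; rewrite pmulrn. Qed.

Theorem lemma6p1 (d : nat) (v : 'I_d.+1 -> 'rV[int]_d)
  (* A = {0, v_0, ..., v_d} has exactly d+2 points *)
  (v_inj : injective v) (v_nz : forall i, v i != 0)
  (* A generates Z^d additively *)
  (A_gen : forall x : 'rV[int]_d, exists c : 'I_d.+1 -> int, x = \sum_(i < d.+1) (v i) *~ c i)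
  (* v_1, ..., v_d linearly independent *)
  (v_indep : forall c : 'I_d -> int,
      \sum_(i < d) (v (lift ord0 i)) *~ c i = 0 -> forall i, c i = 0)
  (N : nat) (HN : is_order_mod_span v N)
  (h : nat) (I : {set 'I_h.+1}) (I_nonempty : I != set0)
  (I_cong : forall i j, i \in I -> j \in I -> (nat_of_ord i = nat_of_ord j %[mod N])%N)
  (m M : 'I_h.+1) (m_in : m \in I) (M_in : M \in I)
  (m_min : forall i, i \in I -> (m <= i)%N) (M_max : forall i, i \in I -> (i <= M)%N) :
  forall x : 'rV[int]_d,
    (forall j, j \in I -> Aset v j h x) <-> (Aset v m h x /\ Aset v M h x).
Proof.
move=> x; split; first by move=> H; split; apply: H.
case=> Am AM j jI.
have mj := m_min _ jI; have mM := m_min _ M_in; have jM := M_max _ jI.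
case: HN => N0 [[c Hc] _].
have [p Hp] : exists p, nat_of_ord j = (m + p * N)%N.
  have := I_cong _ _ jI m_in; move/eqP; rewrite eqn_mod_dvd // => /dvdnP [p Hp].
  by exists p; lia.
have [q Hq] : exists q, nat_of_ord M = (m + q * N)%N.
  have := I_cong _ _ M_in m_in; move/eqP; rewrite eqn_mod_dvd // => /dvdnP [q Hq].
  by exists q; lia.
have pq : (p <= q)%N by apply: contraLR jM; rewrite -!ltnNge => ?; nia.
case: (posnP q) => [q0|qpos].
  have -> : nat_of_ord j = nat_of_ord m by lia.
  exact: Am.
have indep : forall f g : 'I_d -> int, \sum_(i < d) v (lift ord0 i) *~ f i = \sum_(i < d) v (lift ord0 i) *~ g i ->
    forall i, f i = g i.
  move=> f g Hfg i; apply/eqP; rewrite -subr_eq0; apply/eqP.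
  apply: (v_indep (fun i => f i - g i)).
  under eq_bigr do rewrite mulrzBr.
  by rewrite sumrB Hfg subrr.
case: Am => y [[a [Ha ->]] Hx].
case: AM => z [[b [Hb ->]]] Hx'.
rewrite sum_nat_int in Hx; rewrite sum_nat_int in Hx'.
rewrite Hx in Hx'.
have key : forall i, (a i)%:Z = (b i)%:Z + c i * q%:Z.
  apply: indep.
  under [RHS]eq_bigr do rewrite mulrzDr mulrzA.
  rewrite big_split /= -mulrz_suml -Hc -pmulrn -mulrnA mulnC.
  apply: (@addrI _ (v ord0 *+ m)); rewrite Hx' Hq mulrnDr addrA.
  by rewrite addrAC.
have nn : forall i, 0 <= (a i)%:Z - c i * p%:Z.
  move=> i; have := key i; nia.
exists (\sum_(i < d) v (lift ord0 i) *+ absz ((a i)%:Z - c i * p%:Z)%R); split.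
  exists (fun i => absz ((a i)%:Z - c i * p%:Z)%R); split => //.
  rewrite Posz_sum.
  under eq_bigr do rewrite gez0_abs ?nn //.
  rewrite sumrB -mulr_suml.
  have ka : (\sum_(i < d) a i)%N%:Z = (\sum_(i < d) b i)%N%:Z + (\sum_(i < d) c i) * q%:Z.
    by rewrite !Posz_sum mulr_suml -big_split; apply: eq_bigr => i _; rewrite key.
  rewrite -Posz_sum.
  move: Ha Hb ka; rewrite Hp Hq.
  set Sa := (\sum_(i < d) a i)%N; set Sb := (\sum_(i < d) b i)%N; set Sc := \sum_(i < d) c i.
  move=> Ha Hb ka. 
  nia.
rewrite Hx sum_nat_int Hp.
under [X in _ = _ + X]eq_bigr do rewrite gez0_abs ?nn // mulrzBr mulrzA.
rewrite sumrB -mulrz_suml -Hc mulrnDr -addrA; congr (_ + _).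
rewrite -pmulrn -mulrnA mulnC addrC subrK //.
Qed.
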